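(* Let $z^0\in X$, $\gamma\in(0,2)$, $\delta\in[0,1/2)$, and let $\{\sigma_k\},\{\eta_k\}$ be nonnegative with $\sum_k\eta_k<\infty$, $\inf_k\sigma_k>0$; let $z^{k+1}$ be an output of IGPPAstep$(z^k,\sigma_k,\eta_k,\delta,\gamma,M)$ for all $k\ge0$. Assume $T$ satisfies the bounded metric subregularity condition, let $\bar z^0$ be a point of $\Omega$ nearest to $z^0$ in $\|\cdot\|_M$, $r\ge\|\bar z^0\|+\frac{1}{\lambda_{\min}(M)}(\operatorname{dist}_M(z^0,\Omega)+\gamma\sum_k\eta_k)$, and $\kappa_r>0$ with $\operatorname{dist}(z,\Omega)\le\kappa_r\operatorname{dist}(0,T(z))$ for $\|z\|\le r$. Let $\alpha>0$ with $\rho:=\frac{1}{1-\delta}\Big(\sqrt{1-\frac{\min\{\gamma,2\gamma-\gamma^2\}\alpha^2}{\alpha^2+1}}+\delta\big(\frac{\min\{\gamma,1\}}{\sqrt{\alpha^2+1}}+1\big)\Big)<1$ and $C:=\frac{1+\delta}{(1-\delta)(1-\sqrt{1/(\alpha^2+1)})}$. If $\sigma_k\ge\kappa_r\alpha$ for all $k\ge0$, then $\|z^{k+1}-z^k\|_M\le C\rho^k\|z^1-z^0\|_M$ for all $k\ge0$.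
   Context: $X$ is a finite-dimensional real Hilbert space; $T:X\rightrightarrows X$ is maximal monotone with $\Omega:=T^{-1}(0)\neq\emptyset$. $M$ is self-adjoint positive definite with $\lambda_{\max}(M)=1$; $\|z\|_M=\sqrt{\langle z,Mz\rangle}$, $\operatorname{dist}_M(z,D)=\min_{d\in D}\|d-z\|_M$, $\operatorname{dist}=\operatorname{dist}_I$. $\mathcal{J}_{\sigma M^{-1}T}:=(I+\sigma M^{-1}T)^{-1}$. $z^+$ is an output of IGPPAstep$(z,\sigma,\eta,\delta,\gamma,M)$ if $z^+=\gamma w+(1-\gamma)z$ for some $w$ with $\|w-\mathcal{J}_{\sigma M^{-1}T}(z)\|_M\le\min\{\eta,\delta\|w-z\|_M\}$. Bounded metric subregularity: for every $r>0$ there is $\kappa_r>0$ with $\operatorname{dist}(z,\Omega)\le\kappa_r\operatorname{dist}(0,T(z))$ for all $\|z\|\le r$. *)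

(* Defs.v *)
(* X = 'cV[R]_n (finite-dimensional real Hilbert space R^n
   with the standard inner product), R : realType. *)
From HB Require Import structures.
From mathcomp Require Import all_boot all_order all_algebra.
From mathcomp Require Import all_classical all_reals.
From mathcomp Require Import topology normedtype sequences.
Set Implicit Arguments. Unset Strict Implicit. Unset Printing Implicit Defensive.
Import Order.TTheory GRing.Theory Num.Theory numFieldNormedType.Exports.
Local Open Scope ring_scope.
Local Open Scope classical_set_scope.

Section Defs.
Variables (R : realType) (n : nat).
Notation X := 'cV[R]_n.

Definition ip (u v : X) : R := (u^T *m v) 0 0.
Definition nrm (u : X) : R := Num.sqrt (ip u u).
Definition nrmM (M : 'M[R]_n) (u : X) : R := Num.sqrt (ip u (M *m u)).

(* set-valued operators are given by their graphs: T z w  <->  w \in T(z) *)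
Definition monotone_op (T : X -> X -> Prop) : Prop :=
  forall z z' w w', T z w -> T z' w' -> 0 <= ip (z - z') (w - w').
Definition maximal_monotone (T : X -> X -> Prop) : Prop :=
  monotone_op T /\
  forall T' : X -> X -> Prop, monotone_op T' ->
    (forall z w, T z w -> T' z w) -> forall z w, T' z w -> T z w.

Definition zeros (T : X -> X -> Prop) : set X := [set z | T z 0].

Definition distM (M : 'M[R]_n) (z : X) (D : set X) : R :=
  inf [set nrmM M (d - z) | d in D].
Definition dist (z : X) (D : set X) : R := inf [set nrm (d - z) | d in D].

(* u = J_{sigma M^{-1} T}(z) = (I + sigma M^{-1} T)^{-1}(z),
   i.e. z \in u + sigma M^{-1} T(u) *)
Definition is_resolvent (T : X -> X -> Prop) (M : 'M[R]_n) (sigma : R)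
  (z u : X) : Prop :=
  exists w, T u w /\ z = u + sigma *: (invmx M *m w).

Definition IGPPAstep (T : X -> X -> Prop) (z : X) (sigma eta delta gamma : R)
  (M : 'M[R]_n) (zp : X) : Prop :=
  exists w J, is_resolvent T M sigma z J /\
    nrmM M (w - J) <= Num.min eta (delta * nrmM M (w - z)) /\
    zp = gamma *: w + (1 - gamma) *: z.

Definition sym_posdef (M : 'M[R]_n) : Prop :=
  M^T = M /\ forall z : X, z != 0 -> 0 < ip z (M *m z).

Definition is_lambda_max (M : 'M[R]_n) (l : R) : Prop :=
  eigenvalue M l /\ forall a, eigenvalue M a -> a <= l.
Definition is_lambda_min (M : 'M[R]_n) (l : R) : Prop :=
  eigenvalue M l /\ forall a, eigenvalue M a -> l <= a.

(* bounded metric subregularity (dist(0,T(z)) = inf over w in T(z), +oo if empty) *)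
Definition subreg_at (T : X -> X -> Prop) (r kappa : R) : Prop :=
  forall z w, nrm z <= r -> T z w -> dist z (zeros T) <= kappa * nrm w.
Definition bounded_metric_subregular (T : X -> X -> Prop) : Prop :=
  forall r, 0 < r -> exists kappa, 0 < kappa /\ subreg_at T r kappa.

End Defs.

(* Main.v *)
Require Import Defs.
From HB Require Import structures.
From mathcomp Require Import all_boot all_order all_algebra.
From mathcomp Require Import all_classical all_reals.
From mathcomp Require Import topology normedtype sequences.
From mathcomp Require Import derive.
From mathcomp Require Import ring lra.
Import Order.TTheory GRing.Theory Num.Theory numFieldNormedType.Exports.
Local Open Scope ring_scope.
Local Open Scope classical_set_scope.

Lemma ipDl {R : realType} {n : nat} (u v w : 'cV[R]_n) : ip (u + v) w = ip u w + ip v w.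
Proof. by rewrite /ip linearD /= mulmxDl mxE. Qed.
Lemma ipZl {R : realType} {n : nat} (a : R) (u w : 'cV[R]_n) : ip (a *: u) w = a * ip u w.
Proof. by rewrite /ip linearZ /= -scalemxAl mxE. Qed.
Lemma ipC {R : realType} {n : nat} (u v : 'cV[R]_n) : ip u v = ip v u.
Proof. by rewrite /ip -[u^T *m v]trmxK trmx_mul trmxK mxE. Qed.
Lemma ipDr {R : realType} {n : nat} (u v w : 'cV[R]_n) : ip w (u + v) = ip w u + ip w v.
Proof. by rewrite ipC ipDl ![ip _ w]ipC. Qed.
Lemma ipZr {R : realType} {n : nat} (a : R) (u w : 'cV[R]_n) : ip w (a *: u) = a * ip w u.
Proof. by rewrite ipC ipZl ipC. Qed.
Lemma ipNl {R : realType} {n : nat} (u w : 'cV[R]_n) : ip (- u) w = - ip u w.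
Proof. by rewrite -scaleN1r ipZl mulN1r. Qed.
Lemma ipNr {R : realType} {n : nat} (u w : 'cV[R]_n) : ip w (- u) = - ip w u.
Proof. by rewrite ipC ipNl ipC. Qed.
Lemma ipBl {R : realType} {n : nat} (u v w : 'cV[R]_n) : ip (u - v) w = ip u w - ip v w.
Proof. by rewrite ipDl ipNl. Qed.
Lemma ipBr {R : realType} {n : nat} (u v w : 'cV[R]_n) : ip w (u - v) = ip w u - ip w v.
Proof. by rewrite ipDr ipNr. Qed.
Lemma ip0l {R : realType} {n : nat} (w : 'cV[R]_n) : ip 0 w = 0.
Proof. by rewrite -(scale0r (0 : 'cV[R]_n)) ipZl mul0r. Qed.
Lemma ip_ge0 {R : realType} {n : nat} (u : 'cV[R]_n) : 0 <= ip u u.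
Proof.
rewrite /ip mxE; apply: sumr_ge0 => i _; rewrite mxE -expr2; exact: sqr_ge0.
Qed.
Lemma ip_eq0 {R : realType} {n : nat} (u : 'cV[R]_n) : ip u u = 0 -> u = 0.
Proof.
rewrite /ip mxE => /eqP; rewrite psumr_eq0; last first.
  by move=> i _; rewrite mxE -expr2; exact: sqr_ge0.
move=> /allP H; apply/matrixP => i j; rewrite (ord1 j) mxE.
have := H i (mem_index_enum _); rewrite mxE -expr2 sqrf_eq0 => /eqP; done.
Qed.

Lemma tr11 (R : realType) (A : 'M[R]_1) : A 0 0 = A^T 0 0.
Proof. by rewrite mxE. Qed.

Definition bf {R : realType} {n : nat} (M : 'M[R]_n) (u v : 'cV[R]_n) := ip u (M *m v).
Arguments bf {R n}.
Lemma bfC {R : realType} {n : nat} (M : 'M[R]_n) (u v : 'cV[R]_n) : M^T = M -> bf M u v = bf M v u.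
Proof.
move=> hM; rewrite /bf /ip [LHS]tr11 !trmx_mul trmxK hM mulmxA.
by [].
Qed.

Lemma bfDl {R : realType} {n : nat} (M : 'M[R]_n) (u v w : 'cV[R]_n) : bf M (u + v) w = bf M u w + bf M v w.
Proof. exact: ipDl. Qed.
Lemma bfDr {R : realType} {n : nat} (M : 'M[R]_n) (u v w : 'cV[R]_n) : bf M w (u + v) = bf M w u + bf M w v.
Proof. by rewrite /bf mulmxDr ipDr. Qed.
Lemma bfZl {R : realType} {n : nat} (M : 'M[R]_n) (a : R) (u w : 'cV[R]_n) : bf M (a *: u) w = a * bf M u w.
Proof. exact: ipZl. Qed.
Lemma bfZr {R : realType} {n : nat} (M : 'M[R]_n) (a : R) (u w : 'cV[R]_n) : bf M w (a *: u) = a * bf M w u.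
Proof. by rewrite /bf -scalemxAr ipZr. Qed.
Lemma bfNl {R : realType} {n : nat} (M : 'M[R]_n) (u w : 'cV[R]_n) : bf M (- u) w = - bf M u w.
Proof. by rewrite -scaleN1r bfZl mulN1r. Qed.
Lemma bfNr {R : realType} {n : nat} (M : 'M[R]_n) (u w : 'cV[R]_n) : bf M w (- u) = - bf M w u.
Proof. by rewrite -scaleN1r bfZr mulN1r. Qed.
Lemma bfBl {R : realType} {n : nat} (M : 'M[R]_n) (u v w : 'cV[R]_n) : bf M (u - v) w = bf M u w - bf M v w.
Proof. by rewrite bfDl bfNl. Qed.
Lemma bfBr {R : realType} {n : nat} (M : 'M[R]_n) (u v w : 'cV[R]_n) : bf M w (u - v) = bf M w u - bf M w v.
Proof. by rewrite bfDr bfNr. Qed.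
Lemma bf_ge0 {R : realType} {n : nat} (M : 'M[R]_n) (u : 'cV[R]_n) : sym_posdef M -> 0 <= bf M u u.
Proof.
move=> [_ hp]; have [->|nz] := eqVneq u 0; first by rewrite /bf ip0l.
exact/ltW/hp.
Qed.
Lemma nrmM_ge0 {R : realType} {n : nat} (M : 'M[R]_n) (u : 'cV[R]_n) : 0 <= nrmM M u.
Proof. exact: sqrtr_ge0. Qed.
Lemma nrmM_sqr {R : realType} {n : nat} (M : 'M[R]_n) (u : 'cV[R]_n) : sym_posdef M -> nrmM M u ^+ 2 = bf M u u.
Proof. by move=> hM; rewrite /nrmM sqr_sqrtr //; exact: bf_ge0. Qed.

Lemma disc (R : realType) (a b c : R) : 0 <= a ->
  (forall t, 0 <= a * t ^+ 2 + 2 * b * t + c) -> b ^+ 2 <= a * c.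
Proof.
move=> a0 H; have [az|an0] := eqVneq a 0.
  subst a.
  have [b0|bn0] := eqVneq b 0; first by rewrite b0; lra.
  have := H (- (c + 1) / (2 * b)).
  have -> : 2 * b * (- (c + 1) / (2 * b)) = - (c + 1).
    by field.
  lra.
have ap : 0 < a by rewrite lt_neqAle eq_sym an0 a0.
have := H (- b / a).
have -> : a * (- b / a) ^+ 2 + 2 * b * (- b / a) + c = c - b ^+ 2 / a by field.
rewrite subr_ge0 ler_pdivrMr // => h; lra.
Qed.

Lemma bf_CS {R : realType} {n : nat} (M : 'M[R]_n) (u v : 'cV[R]_n) : sym_posdef M ->
  bf M u v <= nrmM M u * nrmM M v.
Proof.
move=> hM.
have h : bf M u v ^+ 2 <= bf M v v * bf M u u.
  apply: disc; first exact: bf_ge0.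
  move=> t; have := bf_ge0 M (u + t *: v) hM.
  rewrite bfDl !bfDr !bfZl !bfZr (bfC M v u hM.1); lra.
rewrite -!nrmM_sqr // in h.
have := nrmM_ge0 M u; have := nrmM_ge0 M v.
set x := bf M u v; set a := nrmM M u; set b := nrmM M v => hb ha.
have : x ^+ 2 <= (a * b) ^+ 2 by rewrite exprMn mulrC.
have : 0 <= a * b by exact: mulr_ge0.
nra.
Qed.

Lemma nrmM_triangle {R : realType} {n : nat} (M : 'M[R]_n) (u v : 'cV[R]_n) : sym_posdef M ->
  nrmM M (u + v) <= nrmM M u + nrmM M v.
Proof.
move=> hM; have := bf_CS M u v hM; have := nrmM_sqr M (u + v) hM.
rewrite bfDl !bfDr (bfC M v u hM.1) -!nrmM_sqr //.
have := nrmM_ge0 M u; have := nrmM_ge0 M v; have := nrmM_ge0 M (u + v).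
nra.
Qed.

Lemma nrmMZ {R : realType} {n : nat} (M : 'M[R]_n) (a : R) (u : 'cV[R]_n) : nrmM M (a *: u) = `|a| * nrmM M u.
Proof. by rewrite /nrmM -/(bf M _ _) bfZl bfZr mulrA -expr2 sqrtrM ?sqr_ge0 // sqrtr_sqr. Qed.
Lemma nrmMN {R : realType} {n : nat} (M : 'M[R]_n) (u : 'cV[R]_n) : nrmM M (- u) = nrmM M u.
Proof. by rewrite -scaleN1r nrmMZ normrN normr1 mul1r. Qed.
Lemma nrmMB {R : realType} {n : nat} (M : 'M[R]_n) (u v : 'cV[R]_n) : nrmM M (u - v) = nrmM M (v - u).
Proof. by rewrite -nrmMN opprB. Qed.

Lemma distM_le {R : realType} {n : nat} (M : 'M[R]_n) (Om : set 'cV[R]_n) x d :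
  Om d -> distM M x Om <= nrmM M (d - x).
Proof.
move=> hd; apply: ge_inf; last by exists d.
by exists 0 => _ [e _ <-]; exact: nrmM_ge0.
Qed.

Lemma distM_glb {R : realType} {n : nat} (M : 'M[R]_n) (Om : set 'cV[R]_n) x y :
  Om !=set0 -> (forall d, Om d -> y <= nrmM M (d - x)) -> y <= distM M x Om.
Proof.
move=> [d0 hd0] H; apply: lb_le_inf; first by exists (nrmM M (d0 - x)), d0.
by move=> _ [e he <-]; exact: H.
Qed.

Lemma distM_ge0 {R : realType} {n : nat} (M : 'M[R]_n) (Om : set 'cV[R]_n) x :
  Om !=set0 -> 0 <= distM M x Om.
Proof. by move=> h; apply: distM_glb => // d _; exact: nrmM_ge0. Qed.

Lemma dist_ge_distM {R : realType} {n : nat} (M : 'M[R]_n) (Om : set 'cV[R]_n) x :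
  Om !=set0 -> (forall u, nrmM M u <= nrm u) -> distM M x Om <= dist x Om.
Proof.
move=> [d0 hd0] H; apply: lb_le_inf; first by exists (nrm (d0 - x)), d0.
move=> _ [e he <-]; apply: le_trans (H _); exact: distM_le.
Qed.

Lemma distM_sq_glb {R : realType} {n : nat} (M : 'M[R]_n) (Om : set 'cV[R]_n) x (a u c : R) :
  Om !=set0 -> 0 < u ->
  (forall p, Om p -> a <= u * nrmM M (p - x) ^+ 2 + c) -> a <= u * distM M x Om ^+ 2 + c.
Proof.
move=> hO hu H.
have [ac|ac] := lerP (a - c) 0.
  have : 0 <= u * distM M x Om ^+ 2 by apply: mulr_ge0; [lra| exact: sqr_ge0].
  lra.
have h1 : Num.sqrt ((a - c) / u) <= distM M x Om.
  apply: distM_glb => // p hp.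
  rewrite -[nrmM M (p - x)](ger0_norm (nrmM_ge0 M (p - x))) -sqrtr_sqr ler_sqrt ?sqr_ge0 //.
  rewrite ler_pdivrMr //; have := H p hp; lra.
have h2 : (a - c) / u <= distM M x Om ^+ 2.
  rewrite -(@sqr_sqrtr _ ((a - c) / u)); last by apply: divr_ge0; lra.
  have := sqrtr_ge0 ((a - c) / u); nra.
move: h2; rewrite ler_pdivrMr //; lra.
Qed.

Lemma distM_lip {R : realType} {n : nat} (M : 'M[R]_n) (Om : set 'cV[R]_n) x y :
  sym_posdef M -> Om !=set0 -> distM M y Om <= distM M x Om + nrmM M (y - x).
Proof.
move=> hM hO.
suff : distM M y Om - nrmM M (y - x) <= distM M x Om by lra.
apply: distM_glb => // p hp.
have := distM_le M Om y p hp; have := nrmM_triangle M (p - x) (x - y) hM.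
have -> : p - x + (x - y) = p - y by rewrite addrA subrK.
rewrite (nrmMB M x y); lra.
Qed.

Lemma ip0r {R : realType} {n : nat} (w : 'cV[R]_n) : ip w 0 = 0.
Proof. by rewrite ipC ip0l. Qed.

Lemma posdef_unit {R : realType} {n : nat} (M : 'M[R]_n) : sym_posdef M -> M \in unitmx.
Proof.
move=> [hs hp]; rewrite unitmxE unitfE; apply/negP => /det0P [v vn0 hv].
have h : M *m v^T = 0 by rewrite -hs -trmx_mul hv trmx0.
have := hp v^T; rewrite trmx_eq0 vn0 h ip0r ltxx; by move=> /(_ isT).
Qed.

Lemma zeros_convex {R : realType} {n : nat} (T : 'cV[R]_n -> 'cV[R]_n -> Prop) p1 p2 (t : R) :
  maximal_monotone T -> T p1 0 -> T p2 0 -> 0 <= t <= 1 -> T (t *: p1 + (1 - t) *: p2) 0.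
Proof.
move=> [hmon hmax] h1 h2 /andP[t0 t1].
set p := t *: p1 + (1 - t) *: p2.
have key : forall z w, T z w -> 0 <= ip (z - p) w.
  move=> z w hzw.
  have -> : z - p = t *: (z - p1) + (1 - t) *: (z - p2).
    by rewrite /p !scalerBr addrACA -scalerDl [t + _]addrC subrK scale1r opprD.
  rewrite ipDl !ipZl.
  have := hmon z p1 w 0 hzw h1; have := hmon z p2 w 0 hzw h2; rewrite !subr0 => a b.
  apply: addr_ge0; apply: mulr_ge0 => //; lra.
apply: (hmax (fun z w => T z w \/ (z = p /\ w = 0))); last by right.
- move=> z z' w w' [hz|[-> ->]] [hz'|[-> ->]].
  + exact: hmon.
  + by rewrite subr0; exact: key.
  + by rewrite sub0r -opprB ipNl ipNr opprK; exact: key.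
  + by rewrite subrr ip0l.
- by move=> z w h; left.
Qed.

Lemma bf_sum {R : realType} {n : nat} (N : 'M[R]_n) (x : 'rV[R]_n) :
  bf N x^T x^T = \sum_i x 0 i * (\sum_j N i j * x 0 j).
Proof.
rewrite /bf /ip mxE; apply: eq_bigr => i _; rewrite !mxE; congr (_ * _).
by apply: eq_bigr => j _; rewrite mxE.
Qed.

Lemma bf_cont {R : realType} {n : nat} (N : 'M[R]_n) :
  continuous (fun x : 'rV[R]_n => bf N x^T x^T).
Proof.
have -> : (fun x : 'rV[R]_n => bf N x^T x^T) =
   (fun x => \sum_i x 0 i * (\sum_j N i j * x 0 j)).
  by apply: funext => x; exact: bf_sum.
apply: continuous_big; first exact: add_continuous.
move=> i _ x; apply: continuousM; first exact: coord_continuous.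
apply: continuous_big; first exact: add_continuous.
move=> j _ y; apply: continuousM; first exact: cst_continuous.
exact: coord_continuous.
Qed.

Lemma ip_bf1 {R : realType} {n : nat} (u v : 'cV[R]_n) : ip u v = bf 1%:M u v.
Proof. by rewrite /bf mul1mx. Qed.

Lemma ip_gt0 {R : realType} {n : nat} (u : 'cV[R]_n) : u != 0 -> 0 < ip u u.
Proof.
move=> h; rewrite lt_neqAle ip_ge0 andbT eq_sym; apply/negP => /eqP /ip_eq0 h0.
by rewrite h0 eqxx in h.
Qed.

Lemma bfZZ {R : realType} {n : nat} (N : 'M[R]_n) (a : R) (u : 'cV[R]_n) :
  bf N (a *: u) (a *: u) = a ^+ 2 * bf N u u.
Proof. by rewrite bfZl bfZr mulrA expr2. Qed.

Lemma rayleigh {R : realType} {n : nat} (N : 'M[R]_n) : N^T = N ->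
  (exists c : 'cV[R]_n, c != 0) ->
  exists mu, eigenvalue N mu /\ forall c, mu * ip c c <= bf N c c.
Proof.
move=> hs [c0 c0n0].
pose A := [set x : 'rV[R]_n | ip x^T x^T = 1].
have A0 : A !=set0.
  pose s := Num.sqrt (ip c0 c0).
  have s0 : 0 < s by rewrite sqrtr_gt0 ip_gt0.
  exists (s^-1 *: c0)^T; rewrite /A /= trmxK ip_bf1 bfZZ -ip_bf1.
  rewrite -(sqr_sqrtr (ip_ge0 c0)) -/s exprVn mulVf //.
  by rewrite expf_neq0 // gt_eqF.
have cA : compact A.
  apply: bounded_closed_compact.
    suff : [bounded x | x in A] by [].
    rewrite /bounded_near; near=> M0 => x /= Ax.
    apply: (@le_trans _ _ 1); last by near: M0; exact: nbhs_pinfty_ge.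
    rewrite /Num.norm /= mx_normrE.
    apply: bigmax_le => // ij _.
    have : x ij.1 ij.2 ^+ 2 <= 1.
      move: Ax; rewrite /A /= /ip mxE => <-.
      rewrite (bigD1 ij.2) //= !mxE (ord1 ij.1) -expr2 lerDl.
      by apply: sumr_ge0 => k _; rewrite !mxE -expr2 sqr_ge0.
    rewrite -(real_normK (num_real _)) => h; have := normr_ge0 (x ij.1 ij.2); nra.
  apply: (@preimage_closed _ _ (fun x : 'rV[R]_n => ip x^T x^T) [set y | y = 1]).
    move=> x _; have := @bf_cont R n 1%:M x.
    by rewrite (_ : (fun x0 : 'rV[R]_n => ip x0^T x0^T) = (fun x0 => bf 1%:M x0^T x0^T)) //;
       apply: funext => y; rewrite ip_bf1.
  exact: closed_eq.
have [u uA umin] := EVT_min_rV A0 cA (continuous_subspaceT (@bf_cont R n N)).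
set mu := bf N u^T u^T.
have hmin : forall c, mu * ip c c <= bf N c c.
  move=> c; have [->|cn0] := eqVneq c 0; first by rewrite ip0l /bf ip0l mulr0.
  pose s := Num.sqrt (ip c c).
  have s0 : 0 < s by rewrite sqrtr_gt0 ip_gt0.
  have ss : s ^+ 2 = ip c c by rewrite sqr_sqrtr // ip_ge0.
  have xA : (s^-1 *: c)^T \in A.
    rewrite inE /A /= trmxK ip_bf1 bfZZ -ip_bf1 -ss exprVn mulVf //.
    by rewrite expf_neq0 // gt_eqF.
  have := umin _ xA; rewrite trmxK bfZZ -/mu exprVn -ss.
  rewrite mulrC -ler_pdivlMr; last by rewrite exprn_gt0.
  by [].
have u1 : ip u^T u^T = 1 by move: uA; rewrite inE.
pose c1 := u^T.
pose B := N - mu%:M.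
have bfB : forall a b, bf B a b = bf N a b - mu * ip a b.
  by move=> a b; rewrite /bf mulmxBl mul_scalar_mx ipBr ipZr.
have hB : forall c, 0 <= bf B c c by move=> c; rewrite bfB subr_ge0.
have Bs : B^T = B by rewrite /B linearB /= tr_scalar_mx hs.
pose v := B *m c1.
have hv : ip v v ^+ 2 <= bf B v v * 0.
  apply: disc; first exact: hB.
  move=> t; have := hB (c1 + t *: v).
  rewrite bfDl !bfDr !bfZl !bfZr (bfC B c1 v Bs).
  have -> : bf B v c1 = ip v v by [].
  have -> : bf B c1 c1 = 0 by rewrite bfB u1 mulr1 subrr.
  lra.
have v0 : v = 0.
  apply: ip_eq0; move: hv; rewrite mulr0 => hv.
  have := ip_ge0 v; nra.
have hN : N *m c1 = mu *: c1.
  by apply/eqP; rewrite -subr_eq0 -mul_scalar_mx -mulmxBl -/B; apply/eqP.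
exists mu; split => //.
apply/eigenvalueP; exists u.
  by have := congr1 trmx hN; rewrite trmx_mul trmxK hs linearZ /= trmxK.
apply/negP => /eqP u0; move: u1; rewrite u0 trmx0 ip0l => /esym/eqP.
by rewrite oner_eq0.
Unshelve. all: by end_near.
Qed.

Lemma nrm_sqr {R : realType} {n : nat} (u : 'cV[R]_n) : nrm u ^+ 2 = ip u u.
Proof. by rewrite /nrm sqr_sqrtr // ip_ge0. Qed.
Lemma nrm_ge0 {R : realType} {n : nat} (u : 'cV[R]_n) : 0 <= nrm u.
Proof. exact: sqrtr_ge0. Qed.

Lemma eig_col {R : realType} {n : nat} (M : 'M[R]_n) a : M^T = M -> eigenvalue M a ->
  exists2 c : 'cV[R]_n, c != 0 & M *m c = a *: c.
Proof.
move=> hs /eigenvalueP [v hv vn0]; exists v^T; first by rewrite trmx_eq0.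
by rewrite -hs -trmx_mul hv linearZ.
Qed.

Lemma ipM {R : realType} {n : nat} (M : 'M[R]_n) (u w : 'cV[R]_n) : M^T = M ->
  ip (M *m u) w = ip u (M *m w).
Proof. by move=> hs; rewrite /ip trmx_mul hs mulmxA. Qed.

Lemma eig_facts {R : realType} {n : nat} (M : 'M[R]_n) (lmin : R) :
  sym_posdef M -> is_lambda_max M 1 -> is_lambda_min M lmin ->
  [/\ (forall u, nrmM M u <= nrm u), (forall u, nrm (M *m u) <= nrmM M u),
      0 < lmin, lmin <= 1 & (forall u, nrm u <= nrmM M u / lmin)].
Proof.
move=> hM [hmax1 hmax2] [hmin1 hmin2].
have hs := hM.1.
have [c0 c0n0 _] := eig_col _ _ hs hmax1.
have ex0 : exists c : 'cV[R]_n, c != 0 by exists c0.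
have ha : forall u, nrmM M u <= nrm u.
  have hs' : (- M)^T = - M by rewrite linearN /= hs.
  have [mu [hmu hle]] := rayleigh _ hs' ex0.
  have hmu' : eigenvalue M (- mu).
    move/eigenvalueP: hmu => [v hv vn0]; apply/eigenvalueP; exists v => //.
    by rewrite scaleNr -hv mulmxN opprK.
  have := hmax2 _ hmu' => hm1.
  move=> u; rewrite /nrmM /nrm ler_sqrt ?ip_ge0 //.
  have := hle u; rewrite /bf mulNmx ipNr -/(bf M u u) => h.
  have := ip_ge0 u; nra.
have [mu [hmu hle]] := rayleigh _ hs ex0.
have hl1 : lmin <= 1 by exact: hmin2.
have hl0 : 0 < lmin.
  have [c cn0 hc] := eig_col _ _ hs hmin1.
  have := hM.2 c cn0; rewrite hc ipZr => h.
  have := ip_gt0 _ cn0 => h2.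
  by rewrite -(pmulr_lgt0 _ h2).
have hc : forall u, lmin * ip u u <= bf M u u.
  move=> u; apply: le_trans (hle u); apply: ler_wpM2r; first exact: ip_ge0.
  exact: hmin2.
split => //.
- move=> u; have := bf_CS M u (M *m u) hM.
  rewrite /bf -(ipM _ _ _ hs) -/(bf M u u) => h.
  have h2 : nrm (M *m u) ^+ 2 <= nrmM M u * nrm (M *m u).
    rewrite nrm_sqr; apply: le_trans h _; apply: ler_wpM2l; first exact: nrmM_ge0.
    exact: ha.
  have := nrm_ge0 (M *m u); have := nrmM_ge0 M u; nra.
- move=> u; rewrite ler_pdivlMr //.
  have := hc u; rewrite -nrm_sqr -nrmM_sqr // => h.
  have := nrm_ge0 u; have := nrmM_ge0 M u; nra.
Qed.

Ltac bfexp := rewrite ?(bfDl, bfDr, bfNl, bfNr, bfZl, bfZr).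

Lemma I1 {R : realType} {n : nat} (M : 'M[R]_n) (z J p : 'cV[R]_n) : M^T = M ->
  bf M (z - p) (z - p) = bf M (J - p) (J - p) + bf M (z - J) (z - J) + 2 * bf M (J - p) (z - J).
Proof.
move=> hs; bfexp; rewrite (bfC M J z hs) (bfC M p z hs) (bfC M p J hs); ring.
Qed.

Lemma I2 {R : realType} {n : nat} (M : 'M[R]_n) (z J p : 'cV[R]_n) (g : R) : M^T = M ->
  bf M (g *: J + (1 - g) *: z - p) (g *: J + (1 - g) *: z - p) =
  bf M (J - p) (J - p) + (1 - g) ^+ 2 * bf M (z - J) (z - J) + 2 * (1 - g) * bf M (J - p) (z - J).
Proof.
move=> hs; bfexp; rewrite (bfC M J z hs) (bfC M p z hs) (bfC M p J hs); ring.
Qed.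

Lemma I3 {R : realType} {n : nat} (M : 'M[R]_n) (z J p1 p2 : 'cV[R]_n) (g : R) : M^T = M ->
  bf M (g *: J + (1 - g) *: z - ((1 - g) *: p1 + (1 - (1 - g)) *: p2))
       (g *: J + (1 - g) *: z - ((1 - g) *: p1 + (1 - (1 - g)) *: p2)) =
  (1 - g) * bf M (z - p1) (z - p1) + g * bf M (J - p2) (J - p2)
  - g * (1 - g) * bf M ((z - p1) - (J - p2)) ((z - p1) - (J - p2)).
Proof.
move=> hs; bfexp.
rewrite (bfC M J z hs) (bfC M p1 z hs) (bfC M p2 z hs) (bfC M p1 J hs) (bfC M p2 J hs) (bfC M p2 p1 hs).
ring.
Qed.

Lemma I4 {R : realType} {n : nat} (M : 'M[R]_n) (z w : 'cV[R]_n) (g : R) :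
  bf M (g *: w + (1 - g) *: z - z) (g *: w + (1 - g) *: z - z) = g ^+ 2 * bf M (w - z) (w - z).
Proof. bfexp; ring. Qed.

Lemma I5 {R : realType} {n : nat} (M : 'M[R]_n) (z w J : 'cV[R]_n) (g : R) :
  bf M (g *: w + (1 - g) *: z - (g *: J + (1 - g) *: z)) (g *: w + (1 - g) *: z - (g *: J + (1 - g) *: z))
  = g ^+ 2 * bf M (w - J) (w - J).
Proof. bfexp; ring. Qed.

Lemma nrmM_sq_eq {R : realType} {n : nat} (M : 'M[R]_n) (u v : 'cV[R]_n) (c : R) :
  0 <= c -> bf M u u = c ^+ 2 * bf M v v -> nrmM M u = c * nrmM M v.
Proof.
by move=> c0 h; rewrite /nrmM -/(bf M u u) -/(bf M v v) h sqrtrM ?sqr_ge0 // sqrtr_sqr ger0_norm.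
Qed.

Lemma nrm_nrmM1 {R : realType} {n : nat} (u : 'cV[R]_n) : nrm u = nrmM 1%:M u.
Proof. by rewrite /nrm /nrmM mul1mx. Qed.

Lemma nrmZ {R : realType} {n : nat} (a : R) (u : 'cV[R]_n) : nrm (a *: u) = `|a| * nrm u.
Proof. by rewrite !nrm_nrmM1 nrmMZ. Qed.

Lemma sq_le {R : realType} {a b : R} : 0 <= b -> a <= b -> 0 <= a -> a ^+ 2 <= b ^+ 2.
Proof. move=> hb hab ha; nra. Qed.

Lemma le_sqrt_mul {R : realType} (a b c : R) : 0 <= a -> 0 <= b -> 0 <= c ->
  a ^+ 2 <= c * b ^+ 2 -> a <= Num.sqrt c * b.
Proof.
move=> a0 b0 c0 h.
rewrite -(ger0_norm a0) -sqrtr_sqr -(ger0_norm b0) -sqrtr_sqr -sqrtrM // ler_sqrt //.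
by apply: mulr_ge0 => //; exact: sqr_ge0.
Qed.

Lemma ar_sq_le {R : realType} (a b c : R) : 0 <= a -> 0 <= b -> a ^+ 2 + c ^+ 2 <= b ^+ 2 -> a <= b.
Proof. move=> a0 b0 h; have := sqr_ge0 c; nra. Qed.
Lemma ar_sq_le' {R : realType} (a b : R) : 0 <= a -> 0 <= b -> a ^+ 2 <= b ^+ 2 -> a <= b.
Proof. move=> a0 b0 h; nra. Qed.
Lemma ar_fejer {R : realType} (A X Y g : R) : 0 <= X -> 0 <= Y -> 0 < g -> g < 2 ->
  A + (1 - g) ^+ 2 * Y + 2 * (1 - g) * X <= A + Y + 2 * X.
Proof. move=> X0 Y0 g0 g2; have : (1 - g) ^+ 2 <= 1 by nra. nra. Qed.
Lemma ar_wJ {R : realType} (x y W d : R) : 0 <= d -> x <= d * y -> y <= x + W -> (1 - d) * x <= d * W.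
Proof. move=> d0 h1 h2; nra. Qed.
Lemma ar_O2 {R : realType} (x y W d : R) : d <= 1 -> (1 - d) * x <= d * W -> y <= x + W -> (1 - d) * y <= W.
Proof. move=> d1 h1 h2; nra. Qed.
Lemma ar_O2b {R : realType} (g d y W Dz : R) : 0 <= g -> (1 - d) * y <= W -> W <= Dz -> (1 - d) * (g * y) <= g * Dz.
Proof. move=> g0 h1 h2; nra. Qed.
Lemma ar_m1 {R : realType} (g : R) : 1 <= g -> 2 * g - g ^+ 2 <= g.
Proof. move=> h; nra. Qed.
Lemma ar_m2 {R : realType} (g : R) : 0 < g -> g < 1 -> g <= 2 * g - g ^+ 2.
Proof. move=> h1 h2; nra. Qed.
Lemma ar_m3 {R : realType} (g : R) : 0 <= g -> g <= 2 -> 0 <= 2 * g - g ^+ 2.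
Proof. move=> h1 h2; nra. Qed.

Lemma ar_q2 {R : realType} (a K W Z : R) : a ^+ 2 * K <= W ^+ 2 -> K + W ^+ 2 <= Z -> (1 + a ^+ 2) * K <= Z.
Proof. move=> h1 h2; lra. Qed.
Lemma ar_c1 {R : realType} (X K V Z g q s2 : R) : X <= 1 * K + (1 - g) ^+ 2 * V ->
  (1 - g) ^+ 2 * V <= (1 - g) ^+ 2 * (Z - K) ->
  (2 * g - g ^+ 2) * K <= (2 * g - g ^+ 2) * (q * Z) ->
  (2 * g - g ^+ 2) * (q * Z) + (1 - g) ^+ 2 * Z = s2 * Z -> X <= s2 * Z.
Proof.
move=> h1 h2 h3 h4.
have e : 1 * K + (1 - g) ^+ 2 * (Z - K) = (2 * g - g ^+ 2) * K + (1 - g) ^+ 2 * Z by ring.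
lra.
Qed.
Lemma ar_c2 {R : realType} (X K Z g q s2 : R) : X <= (1 - g) * Z + g * K ->
  g * K <= g * (q * Z) -> (1 - g) * Z + g * (q * Z) = s2 * Z -> X <= s2 * Z.
Proof. move=> h1 h2 h3; lra. Qed.
Lemma ar_c1a {R : realType} (A B X g : R) : 0 <= (g - 1) * X -> A + B + 2 * (1 - g) * X <= A + B.
Proof. move=> h; lra. Qed.
Lemma ar_s2 {R : realType} (m a : R) : 0 <= m -> m <= 1 -> 0 <= 1 - m * a ^+ 2 / (a ^+ 2 + 1).
Proof.
move=> m0 m1; have ha : 0 < a ^+ 2 + 1 by apply: ltr_wpDl; [exact: sqr_ge0 | exact: ltr01].
rewrite subr_ge0 ler_pdivrMr // mul1r.
have := sqr_ge0 a; nra.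
Qed.
Lemma ar_gs {R : realType} (g a : R) : 0 < g -> g < 2 ->
  g <= 1 + Num.sqrt (1 - Num.min g (2 * g - g ^+ 2) * a ^+ 2 / (a ^+ 2 + 1)).
Proof.
move=> g0 g2; have [g1|g1] := lerP g 1.
  by have := sqrtr_ge0 (1 - Num.min g (2 * g - g ^+ 2) * a ^+ 2 / (a ^+ 2 + 1)); lra.
rewrite min_r; last by apply: ar_m1; lra.
have ha : 0 < a ^+ 2 + 1 by apply: ltr_wpDl; [exact: sqr_ge0 | exact: ltr01].
have hm : 0 <= 2 * g - g ^+ 2 by apply: ar_m3; lra.
have h : (g - 1) ^+ 2 <= 1 - (2 * g - g ^+ 2) * a ^+ 2 / (a ^+ 2 + 1).
  have e : (g - 1) ^+ 2 = 1 - (2 * g - g ^+ 2) by ring.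
  rewrite e lerD2l lerN2 ler_pdivrMr //.
  have := sqr_ge0 a; nra.
have := sqrtr_ge0 (1 - (2 * g - g ^+ 2) * a ^+ 2 / (a ^+ 2 + 1)).
have h2 : Num.sqrt ((g - 1) ^+ 2) <= Num.sqrt (1 - (2 * g - g ^+ 2) * a ^+ 2 / (a ^+ 2 + 1)).
  by rewrite ler_sqrt // (le_trans (sqr_ge0 _) h).
rewrite sqrtr_sqr ger0_norm in h2; last lra.
lra.
Qed.
Lemma ar_fin {R : realType} {Dzp Dzh Dz s d g x W q : R} :
  Dzp <= Dzh + g * x -> Dzh <= s * Dz -> (1 - d) * x <= d * W -> W <= Dz ->
  g <= 1 + s -> 0 <= d -> d < 1 / 2 -> 0 < g -> 0 <= Dz -> 0 <= q -> 0 <= s ->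
  Dzp <= (1 - d)^-1 * (s + d * (q + 1)) * Dz.
Proof.
move=> h1 h2 h3 h4 h5 d0 d1 g0 Dz0 q0 s0.
have d1' : 0 < 1 - d by lra.
rewrite -mulrA ler_pdivlMl //.
have e1 : g * ((1 - d) * x) <= g * (d * Dz).
  by apply: ler_wpM2l; [lra | apply: le_trans h3 _; apply: ler_wpM2l].
have e2 : (1 - d) * Dzh <= (1 - d) * (s * Dz) by apply: ler_wpM2l; lra.
have e3 : g * d * Dz <= (1 + s) * d * Dz.
  by apply: ler_wpM2r => //; apply: ler_wpM2r.
have e4 : 0 <= d * q * Dz by apply: mulr_ge0 => //; apply: mulr_ge0.
have e5 : (1 - d) * Dzp <= (1 - d) * (Dzh + g * x) by apply: ler_wpM2l; lra.
have e6 : (1 - d) * (Dzh + g * x) = (1 - d) * Dzh + g * ((1 - d) * x) by ring.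
have e7 : (s + d * (q + 1)) * Dz = (1 - d) * (s * Dz) + (1 + s) * d * Dz + d * q * Dz by ring.
have e8 : g * (d * Dz) = g * d * Dz by ring.
lra.
Qed.
Lemma ar_fin2 {R : realType} {Dz DJ W q y x d g : R} :
  Dz <= DJ + W -> DJ <= q * Dz -> W <= y + x -> x <= d * y -> 0 <= g ->
  g * (1 - q) * Dz <= (1 + d) * (g * y).
Proof.
move=> h1 h2 h3 h4 g0.
have e : (1 - q) * Dz <= (1 + d) * y by lra.
have := ler_wpM2l g0 e.
have -> : (1 + d) * (g * y) = g * ((1 + d) * y) by ring.
by rewrite !mulrA.
Qed.

Lemma step {R : realType} {n : nat} (T : 'cV[R]_n -> 'cV[R]_n -> Prop) (M : 'M[R]_n)
  (hT : maximal_monotone T) (hM : sym_posdef M) (hO : zeros T !=set0)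
  (hE1 : forall u, nrmM M u <= nrm u) (hE2 : forall u, nrm (M *m u) <= nrmM M u)
  (z J w w' zp : 'cV[R]_n) (sigma eta delta gamma alpha kappa r : R)
  (hTJ : T J w') (hres : z = J + sigma *: (invmx M *m w'))
  (hw : nrmM M (w - J) <= Num.min eta (delta * nrmM M (w - z)))
  (hzp : zp = gamma *: w + (1 - gamma) *: z)
  (hg : 0 < gamma < 2) (hd : 0 <= delta < 1 / 2) (hk : 0 < kappa) (ha : 0 < alpha)
  (hsk : kappa * alpha <= sigma) (hsub : subreg_at T r kappa) :
  [/\ (forall p, T p 0 -> nrmM M (zp - p) <= nrmM M (z - p) + gamma * eta /\
                          nrmM M (J - p) <= nrmM M (z - p)),
      (1 - delta) * nrmM M (zp - z) <= gamma * distM M z (zeros T) &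
      (nrm J <= r ->
        distM M zp (zeros T) <= (1 - delta)^-1 *
     (Num.sqrt (1 - Num.min gamma (2 * gamma - gamma ^+ 2) * alpha ^+ 2 / (alpha ^+ 2 + 1))
      + delta * (Num.min gamma 1 / Num.sqrt (alpha ^+ 2 + 1) + 1)) * distM M z (zeros T) /\
        gamma * (1 - Num.sqrt (1 / (alpha ^+ 2 + 1))) * distM M z (zeros T)
          <= (1 + delta) * nrmM M (zp - z))].
Proof.
have hsym := hM.1.
set N := nrmM M; set Om := zeros T.
have hN0 : forall u, 0 <= N u by move=> u; exact: nrmM_ge0.
have hNsq : forall u, N u ^+ 2 = bf M u u by move=> u; exact: nrmM_sqr.
have hNB : forall u v, N (u - v) = N (v - u) by move=> u v; exact: nrmMB.
have hD0 : forall x, 0 <= distM M x Om by move=> x; exact: distM_ge0.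
have hsig : 0 < sigma by apply: lt_le_trans hsk; exact: mulr_gt0.
move: hg hd => /andP[g0 g2] /andP[d0 d1].
have g0' : 0 <= gamma by exact: ltW.
have d1' : delta <= 1 by lra.
have hk' : 0 <= kappa by exact: ltW.
have hMzJ : M *m (z - J) = sigma *: w'.
  rewrite hres addrAC subrr add0r -scalemxAr mulmxA mulmxV ?mul1mx //.
  exact: posdef_unit.
have hmono : forall p, T p 0 -> 0 <= bf M (J - p) (z - J).
  move=> p hp; have := hT.1 J p w' 0 hTJ hp; rewrite subr0 /bf hMzJ ipZr => h.
  exact: mulr_ge0 (ltW hsig) h.
have firm : forall p, T p 0 -> N (J - p) ^+ 2 + N (z - J) ^+ 2 <= N (z - p) ^+ 2.
  move=> p hp; rewrite !hNsq (I1 M z J p hsym); have := hmono p hp; lra.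
have hJp : forall p, T p 0 -> N (J - p) <= N (z - p).
  move=> p hp; have := firm p hp; have := hN0 (J - p); have := hN0 (z - p).
  by move=> h1 h2 h3; apply: (ar_sq_le _ _ (N (z - J))).
set zh := gamma *: J + (1 - gamma) *: z.
have fejer : forall p, T p 0 -> N (zh - p) <= N (z - p).
  move=> p hp.
  have h : N (zh - p) ^+ 2 <= N (z - p) ^+ 2.
    rewrite !hNsq /zh (I2 M z J p gamma hsym) (I1 M z J p hsym).
    have := hmono p hp; have := bf_ge0 M (z - J) hM.
    set X := bf M (J - p) (z - J); set Y := bf M (z - J) (z - J) => hY hX.
    by apply: ar_fejer.
  by apply: ar_sq_le'.
have hwJeta : N (w - J) <= eta by move: hw; rewrite le_min => /andP[].
have hwJd : N (w - J) <= delta * N (w - z) by move: hw; rewrite le_min => /andP[].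
have hwz : N (w - z) <= N (w - J) + N (z - J).
  rewrite (hNB z J); have := nrmM_triangle M (w - J) (J - z) hM.
  by rewrite addrA subrK.
have hwJ : (1 - delta) * N (w - J) <= delta * N (z - J).
  by apply: ar_wJ hwJd hwz.
have hzpzh : N (zp - zh) = gamma * N (w - J).
  by apply: nrmM_sq_eq; [lra | rewrite hzp /zh I5].
have hzpz : N (zp - z) = gamma * N (w - z).
  by apply: nrmM_sq_eq; [lra | rewrite hzp I4].
have O1 : forall p, T p 0 -> N (zp - p) <= N (z - p) + gamma * eta /\ N (J - p) <= N (z - p).
  move=> p hp; split; last exact: hJp.
  have := nrmM_triangle M (zp - zh) (zh - p) hM; rewrite addrA subrK => h.
  have := fejer p hp; rewrite -/N in h *; rewrite hzpzh in h.
  have e : gamma * N (w - J) <= gamma * eta by apply: ler_wpM2l.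
  move=> hf; apply: le_trans h _; rewrite [X in _ <= X]addrC; exact: lerD.
have hdJ : distM M J Om ^+ 2 + N (z - J) ^+ 2 <= distM M z Om ^+ 2.
  have := @distM_sq_glb R n M Om z (distM M J Om ^+ 2 + N (z - J) ^+ 2) 1 0 hO ltr01.
  rewrite mul1r addr0; apply => p hp; rewrite mul1r addr0 -/N (hNB p z).
  apply: le_trans (firm p hp); rewrite lerD2r.
  apply: sq_le; [exact: hN0 | | exact: hD0].
  rewrite (hNB J p); exact: distM_le.
have hNzJ : N (z - J) <= distM M z Om.
  by apply: (ar_sq_le _ _ (distM M J Om) (hN0 _) (hD0 _)); rewrite addrC.
have O2 : (1 - delta) * N (zp - z) <= gamma * distM M z Om.
  rewrite hzpz.
  have h : (1 - delta) * N (w - z) <= N (z - J).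
    by apply: ar_O2 hwJ hwz.
  by apply: ar_O2b h hNzJ.
split => //.
move=> hJr.
set Dz := distM M z Om; set DJ := distM M J Om; set W := N (z - J).
have hDz0 : 0 <= Dz by exact: hD0.
have hDJ0 : 0 <= DJ by exact: hD0.
have hW0 : 0 <= W by exact: hN0.
have hsubJ := hsub J w' hJr hTJ.
have hw'E : w' = sigma^-1 *: (M *m (z - J)).
  by rewrite hMzJ scalerA mulVf ?gt_eqF // scale1r.
have hDJ1 : DJ <= dist J Om by exact: dist_ge_distM.
have haDJ : alpha * DJ <= W.
  have h1 : DJ <= kappa * (sigma^-1 * W).
    apply: le_trans hDJ1 (le_trans hsubJ _); apply: ler_wpM2l => //.
    rewrite hw'E nrmZ ger0_norm ?invr_ge0 ?(ltW hsig) //.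
    by apply: ler_wpM2l; [rewrite invr_ge0 ltW | exact: hE2].
  have h2 : sigma * DJ <= kappa * W.
    by move: h1; rewrite mulrCA ler_pdivlMl.
  have h3 : kappa * (alpha * DJ) <= kappa * W.
    apply: le_trans h2; rewrite mulrA; apply: ler_wpM2r => //.
  by rewrite ler_pM2l in h3.
have hq2 : (1 + alpha ^+ 2) * DJ ^+ 2 <= Dz ^+ 2.
  have h := sq_le hW0 haDJ (mulr_ge0 (ltW ha) hDJ0).
  by rewrite exprMn in h; apply: ar_q2 h hdJ.
have hK : DJ ^+ 2 <= (1 / (alpha ^+ 2 + 1)) * Dz ^+ 2.
  rewrite mul1r mulrC -[_ * _ ^-1]/(_ / _) ler_pdivlMr; last first.
    by apply: ltr_wpDl; [exact: sqr_ge0 | exact: ltr01].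
  by rewrite mulrC addrC.
have hal : 0 < alpha ^+ 2 + 1 by apply: ltr_wpDl; [exact: sqr_ge0 | exact: ltr01].
set m := Num.min gamma (2 * gamma - gamma ^+ 2).
set s2 := 1 - m * alpha ^+ 2 / (alpha ^+ 2 + 1).
have hzh : distM M zh Om ^+ 2 <= s2 * Dz ^+ 2.
  case: (lerP 1 gamma) => hg1.
  - have hm : m = 2 * gamma - gamma ^+ 2 by rewrite /m min_r // ar_m1.
    have h1 : distM M zh Om ^+ 2 <= 1 * DJ ^+ 2 + (1 - gamma) ^+ 2 * W ^+ 2.
      apply: distM_sq_glb => //.
      move=> p hp.
      rewrite mul1r -/N (hNB p J).
      have h := distM_le M Om zh p hp.
      apply: le_trans (sq_le (hN0 _) h (hD0 _)) _.
      rewrite -/N (hNB p zh) !hNsq /zh (I2 M z J p gamma hsym) -!hNsq -/W.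
      apply: ar_c1a; apply: mulr_ge0; [rewrite subr_ge0 // | exact: hmono].
    have e1 : (1 - gamma) ^+ 2 * W ^+ 2 <= (1 - gamma) ^+ 2 * (Dz ^+ 2 - DJ ^+ 2).
      apply: ler_wpM2l; first exact: sqr_ge0.
      by rewrite lerBrDl.
    have e2 : (2 * gamma - gamma ^+ 2) * DJ ^+ 2 <= (2 * gamma - gamma ^+ 2) * ((1 / (alpha ^+ 2 + 1)) * Dz ^+ 2).
      by apply: ler_wpM2l => //; apply: ar_m3 => //; exact: ltW.
    have e3 : (2 * gamma - gamma ^+ 2) * ((1 / (alpha ^+ 2 + 1)) * Dz ^+ 2) + (1 - gamma) ^+ 2 * Dz ^+ 2
        = s2 * Dz ^+ 2.
      by rewrite /s2 hm; field; rewrite gt_eqF.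
    exact: ar_c1 h1 e1 e2 e3.
  - have hm : m = gamma by rewrite /m min_l // ar_m2.
    have g1' : 0 < 1 - gamma by rewrite subr_gt0.
    have conv : forall p1 p2, Om p1 -> Om p2 ->
        distM M zh Om ^+ 2 <= (1 - gamma) * N (z - p1) ^+ 2 + gamma * N (J - p2) ^+ 2.
      move=> p1 p2 h1 h2.
      have hp : Om ((1 - gamma) *: p1 + (1 - (1 - gamma)) *: p2).
        apply: zeros_convex => //; apply/andP; split; first exact: ltW.
        by rewrite gerBl.
      have h := distM_le M Om zh _ hp.
      apply: le_trans (sq_le (hN0 _) h (hD0 _)) _.
      rewrite -/N hNB !hNsq /zh (I3 M z J p1 p2 gamma hsym) -!hNsq gerBl.
      apply: mulr_ge0; [apply: mulr_ge0; exact: ltW | exact: sqr_ge0].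
    have st1 : forall p1, Om p1 ->
        distM M zh Om ^+ 2 <= gamma * DJ ^+ 2 + (1 - gamma) * N (z - p1) ^+ 2.
      move=> p1 hp1; apply: distM_sq_glb => // p2 hp2.
      by rewrite -/N (hNB p2 J) addrC; exact: conv.
    have st2 : distM M zh Om ^+ 2 <= (1 - gamma) * Dz ^+ 2 + gamma * DJ ^+ 2.
      apply: distM_sq_glb => //.
      by move=> p1 hp1; rewrite -/N (hNB p1 z) addrC; exact: st1.
    have e2 : gamma * DJ ^+ 2 <= gamma * ((1 / (alpha ^+ 2 + 1)) * Dz ^+ 2).
      by apply: ler_wpM2l.
    have e3 : (1 - gamma) * Dz ^+ 2 + gamma * ((1 / (alpha ^+ 2 + 1)) * Dz ^+ 2) = s2 * Dz ^+ 2.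
      by rewrite /s2 hm; field; rewrite gt_eqF.
    exact: ar_c2 st2 e2 e3.
have hm0 : 0 <= m by rewrite /m le_min (ltW g0) /= ar_m3 // ltW.
have hm1 : m <= 1.
  rewrite /m ge_min; apply/orP; right.
  have := sqr_ge0 (gamma - 1).
  have -> : (gamma - 1) ^+ 2 = 1 - (2 * gamma - gamma ^+ 2) by ring.
  by rewrite subr_ge0.
have hs2 : 0 <= s2 by exact: ar_s2.
have hDzh : distM M zh Om <= Num.sqrt s2 * Dz.
  by apply: le_sqrt_mul => //; exact: hD0.
have hDzp := distM_lip M Om zh zp hM hO.
rewrite -/N hzpzh in hDzp.
split.
  apply: (ar_fin hDzp hDzh hwJ hNzJ) => //.
  - exact: ar_gs.
  - apply: divr_ge0; last exact: sqrtr_ge0.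
    by rewrite le_min (ltW g0) ler01.
  - exact: sqrtr_ge0.
have hDzJ := distM_lip M Om J z hM hO.
have hDJq : DJ <= Num.sqrt (1 / (alpha ^+ 2 + 1)) * Dz.
  apply: le_sqrt_mul => //; exact: (divr_ge0 ler01 (ltW hal)).
have hzw : W <= N (w - z) + N (w - J).
  rewrite /W (hNB w z); have := nrmM_triangle M (z - w) (w - J) hM.
  by rewrite addrA subrK.
rewrite hzpz.
exact: ar_fin2 hDzJ hDJq hzw hwJd g0'.
Qed.

Lemma ar_final {R : realType} {Nk Dk D0 N1 g d q rk : R} :
  (1 - d) * Nk <= g * Dk -> Dk <= rk * D0 -> g * (1 - q) * D0 <= (1 + d) * N1 ->
  0 < g -> 0 <= d -> d < 1 / 2 -> q < 1 -> 0 <= rk ->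
  Nk <= (1 + d) / ((1 - d) * (1 - q)) * rk * N1.
Proof.
move=> h1 h2 h3 g0 d0 d1 q1 rk0.
have hd : 0 < 1 - d by lra.
have hq : 0 < 1 - q by lra.
have e1 : Nk <= g * Dk / (1 - d) by rewrite ler_pdivlMr // mulrC.
have e2 : g * Dk <= g * (rk * D0) by apply: ler_wpM2l => //; exact: ltW.
have e3 : D0 <= (1 + d) * N1 / (g * (1 - q)).
  by rewrite ler_pdivlMr ?mulr_gt0 // mulrC.
have e4 : g * (rk * D0) <= g * (rk * ((1 + d) * N1 / (g * (1 - q)))).
  by apply: ler_wpM2l; [exact: ltW | apply: ler_wpM2l].
have e5 : g * (rk * ((1 + d) * N1 / (g * (1 - q)))) / (1 - d) =
          (1 + d) / ((1 - d) * (1 - q)) * rk * N1.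
  by field; rewrite !gt_eqF.
rewrite -e5; apply: le_trans e1 _; rewrite ler_pdivrMr // divfK ?gt_eqF //.
exact: le_trans e2 e4.
Qed.

Lemma posdef1 {R : realType} {n : nat} : sym_posdef (1%:M : 'M[R]_n).
Proof.
split; first exact: tr_scalar_mx.
by move=> z hz; rewrite mul1mx; exact: ip_gt0.
Qed.

Lemma nrm_triangle {R : realType} {n : nat} (u v : 'cV[R]_n) : nrm (u + v) <= nrm u + nrm v.
Proof. rewrite !nrm_nrmM1; exact: nrmM_triangle posdef1. Qed.

Theorem corollary2 (R : realType) (n : nat)
  (T : 'cV[R]_n -> 'cV[R]_n -> Prop) (M : 'M[R]_n) (lmin : R)
  (hT : maximal_monotone T) (hOmega : zeros T !=set0)
  (hM : sym_posdef M) (hMmax : is_lambda_max M 1) (hMmin : is_lambda_min M lmin)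
  (z : nat -> 'cV[R]_n) (gamma delta : R) (sigma eta : nat -> R)
  (hgamma : 0 < gamma < 2) (hdelta : 0 <= delta < 1 / 2)
  (hsig0 : forall k, 0 <= sigma k) (heta0 : forall k, 0 <= eta k)
  (heta : cvgn (series eta)) (hsiginf : 0 < inf (range sigma))
  (hstep : forall k, IGPPAstep T (z k) (sigma k) (eta k) delta gamma M (z k.+1))
  (hBMS : bounded_metric_subregular T)
  (zbar0 : 'cV[R]_n) (hzbar0 : zeros T zbar0)
  (hzbar0min : forall d, zeros T d -> nrmM M (zbar0 - z 0) <= nrmM M (d - z 0))
  (r kappa : R)
  (hr : nrm zbar0 + (distM M (z 0) (zeros T) + gamma * limn (series eta)) / lmin <= r)
  (hkappa : 0 < kappa) (hkr : subreg_at T r kappa)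
  (alpha : R) (halpha : 0 < alpha)
  (hrho : (1 - delta)^-1 *
     (Num.sqrt (1 - Num.min gamma (2 * gamma - gamma ^+ 2) * alpha ^+ 2 / (alpha ^+ 2 + 1))
      + delta * (Num.min gamma 1 / Num.sqrt (alpha ^+ 2 + 1) + 1)) < 1)
  (hsigma : forall k, kappa * alpha <= sigma k) :
  let rho := (1 - delta)^-1 *
     (Num.sqrt (1 - Num.min gamma (2 * gamma - gamma ^+ 2) * alpha ^+ 2 / (alpha ^+ 2 + 1))
      + delta * (Num.min gamma 1 / Num.sqrt (alpha ^+ 2 + 1) + 1)) in
  let C := (1 + delta) / ((1 - delta) * (1 - Num.sqrt (1 / (alpha ^+ 2 + 1)))) in
  forall k : nat,
    nrmM M (z k.+1 - z k) <= C * rho ^+ k * nrmM M (z 1 - z 0).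
Proof.
move=> rho C.
have [hE1 hE2 hl0 hl1 hE3] := eig_facts M lmin hM hMmax hMmin.
set Om := zeros T.
set N := nrmM M.
set L := limn (series eta).
have hD0 : distM M (z 0) Om = N (zbar0 - z 0).
  apply/eqP; rewrite eq_le; apply/andP; split; first exact: distM_le.
  exact: distM_glb.
have hSL : forall k, series eta k <= L.
  apply: nondecreasing_cvgn_le => //; apply/nondecreasing_seqP => k.
  by rewrite seriesSr lerDl.
have ST : forall k, exists J,
   [/\ (forall p, T p 0 -> N (z k.+1 - p) <= N (z k - p) + gamma * eta k /\
                          N (J - p) <= N (z k - p)),
      (1 - delta) * N (z k.+1 - z k) <= gamma * distM M (z k) Om &
      (nrm J <= r ->
        distM M (z k.+1) Om <= rho * distM M (z k) Om /\
        gamma * (1 - Num.sqrt (1 / (alpha ^+ 2 + 1))) * distM M (z k) Om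
          <= (1 + delta) * N (z k.+1 - z k))].
  move=> k; have [w [J [[w' [hTJ hres]] [hw hzp]]]] := hstep k.
  exists J; exact: (step T M hT hM hOmega hE1 hE2 _ _ _ _ _ _ _ _ _ _ _ _ hTJ hres hw hzp hgamma hdelta hkappa halpha (hsigma k) hkr).
have fej : forall k, N (z k - zbar0) <= N (z 0 - zbar0) + gamma * series eta k.
  elim=> [|k IH].
    by rewrite /series /= big_geq // mulr0 addr0.
  have [J [O1 _ _]] := ST k.
  have [h _] := O1 zbar0 hzbar0.
  apply: le_trans h _; rewrite seriesSr mulrDr addrA lerD2r; exact: IH.
have hbd : forall k, N (z k - zbar0) <= distM M (z 0) Om + gamma * L.
  move=> k; apply: le_trans (fej k) _; rewrite hD0 /N (nrmMB M (z 0)) lerD2l.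
  apply: ler_wpM2l; [move: hgamma => /andP[g0 _]; exact: ltW | exact: hSL].
have hJr : forall k J, (forall p, T p 0 -> N (J - p) <= N (z k - p)) -> nrm J <= r.
  move=> k J hJ; apply: le_trans hr.
  have := nrm_triangle zbar0 (J - zbar0); rewrite addrC subrK => h.
  apply: le_trans h _; rewrite lerD2l.
  apply: le_trans (hE3 _) _; apply: ler_wpM2r; first by rewrite invr_ge0 ltW.
  apply: le_trans (hJ _ hzbar0) _; exact: hbd.
have contr : forall k, distM M (z k) Om <= rho ^+ k * distM M (z 0) Om.
  elim=> [|k IH]; first by rewrite expr0 mul1r.
  have [J [O1 _ O3]] := ST k.
  have [h _] := O3 (hJr k J (fun p hp => (O1 p hp).2)).
  apply: le_trans h _; rewrite exprS -mulrA; apply: ler_wpM2l => //.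
  rewrite /rho; apply: mulr_ge0; first by rewrite invr_ge0; move: hdelta => /andP[_ ?]; lra.
  apply: addr_ge0; first exact: sqrtr_ge0.
  apply: mulr_ge0; first by move: hdelta => /andP[].
  apply: addr_ge0 => //; apply: divr_ge0; last exact: sqrtr_ge0.
  by rewrite le_min ler01 andbT; move: hgamma => /andP[g0 _]; exact: ltW.
have [J0 [O10 _ O30]] := ST 0%N.
have [_ h0] := O30 (hJr 0%N J0 (fun p hp => (O10 p hp).2)).
move=> k.
have [J [_ O2 _]] := ST k.
have rho0 : 0 <= rho.
  rewrite /rho; apply: mulr_ge0; first by rewrite invr_ge0; move: hdelta => /andP[_ ?]; lra.
  apply: addr_ge0; first exact: sqrtr_ge0.
  apply: mulr_ge0; first by move: hdelta => /andP[].
  apply: addr_ge0 => //; apply: divr_ge0; last exact: sqrtr_ge0.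
  by rewrite le_min ler01 andbT; move: hgamma => /andP[g0 _]; exact: ltW.
have hq1 : Num.sqrt (1 / (alpha ^+ 2 + 1)) < 1.
  have hal : 0 < alpha ^+ 2 + 1 by apply: ltr_wpDl; [exact: sqr_ge0 | exact: ltr01].
  rewrite -[X in _ < X]sqrtr1 ltr_sqrt ?ltr01 // ltr_pdivrMr // mul1r ltrDr.
  exact: exprn_gt0.
move: hgamma hdelta => /andP[g0 g2] /andP[d0 d1].
exact: (ar_final O2 (contr k) h0 g0 d0 d1 hq1 (exprn_ge0 k rho0)).
Qed.
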